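(* Let $\epsilon\in\{1,-1\}\subseteq\mathbb{F}_{p^m}$, $\phi(x)=x^2+\epsilon\gamma x+\frac{\gamma^2}{2}$, $\mathsf{R}_{\epsilon\gamma}=R[x]/\langle\phi(x)^{p^s}\rangle$, and let $\mathcal{I}$ be an ideal of $\mathsf{R}_{\epsilon\gamma}$ (notation and parameter ranges as in the classification into Types I–IV below). Then: (a) if $\mathcal{I}=\{0\}$, $|\mathcal{I}|=1$; (b) if $\mathcal{I}=\mathsf{R}_{\epsilon\gamma}$, $|\mathcal{I}|=p^{4mp^s}$; (c) if $\mathcal{I}=\langle u\phi(x)^i\rangle$ with $0\le i\le p^s-1$, $|\mathcal{I}|=p^{2m(p^s-i)}$; (d) if $\mathcal{I}=\langle\phi(x)^i+u\phi(x)^th(x)\rangle$ is of Type III, then $|\mathcal{I}|=p^{4m(p^s-i)}$ if either $h(x)=0$, or $h(x)$ is a unit and $1\le i\le\frac{p^s+t}{2}$; and $|\mathcal{I}|=p^{2m(p^s-t)}$ if $h(x)$ is a unit and $\frac{p^s+t}{2}<i\le p^s-1$; (e) if $\mathcal{I}=\langle\phi(x)^i+u\phi(x)^th(x),\ u\phi(x)^w\rangle$ is of Type IV, $|\mathcal{I}|=p^{2m(2p^s-i-w)}$.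
   Context: Let $p$ be an odd prime and $m,s$ positive integers with $p^m\equiv 3\pmod 4$; $\mathbb{F}_{p^m}$ is the field with $p^m$ elements and $R=\mathbb{F}_{p^m}[u]/\langle u^2\rangle$. Fix $\alpha\in\mathbb{F}_{p^m}\setminus\{0\}$ non-square, $\alpha_0^{p^s}=\alpha$, $\gamma\in\mathbb{F}_{p^m}$ with $\gamma^4+4\alpha_0=0$. Ideal types of $\mathsf{R}_{\epsilon\gamma}$: Type III ideals are $\langle\phi^i+u\phi^th\rangle$ with $1\le i\le p^s-1$, $0\le t<i$, and $h=0$ or $h$ a unit of the form $\sum_{j=0}^{i-t-1}(a_{j0}x+b_{j0})\phi^j$ ($a_{j0},b_{j0}\in\mathbb{F}_{p^m}$, $a_{00}x+b_{00}\ne0$). Type IV ideals are $\langle\phi^i+u\phi^th,\ u\phi^w\rangle$ with $1\le i\le p^s-1$, $0\le t<w$, $h=0$ or $h$ a unit of the form $\sum_{j=0}^{w-t-1}(a_{j0}x+b_{j0})\phi^j$ with $a_{00}x+b_{00}\neq 0$, and $w<U$ where $U$ is the least integer with $u\phi^U\in\langle\phi^i+u\phi^th\rangle$. *)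

(* Defs.v *)
From HB Require Import structures.
From mathcomp Require Import all_boot all_order all_algebra.
Set Implicit Arguments. Unset Strict Implicit. Unset Printing Implicit Defensive.
Import GRing.Theory.
Local Open Scope ring_scope.

(* R = F[u]/<u^2>, realised as the quotient ring {poly %/ 'X^2} with u = 'qX *)
Definition Ru (F : finFieldType) := {poly %/ ('X^2 : {poly F})}.
HB.instance Definition _ (F : finFieldType) := Finite.on (Ru F).
HB.instance Definition _ (F : finFieldType) := GRing.ComNzRing.on (Ru F).
Definition uR (F : finFieldType) : Ru F := 'qX.
Definition cR (F : finFieldType) (c : F) : Ru F := in_qpoly ('X^2 : {poly F}) c%:P.
Definition liftp (F : finFieldType) (q : {poly F}) : {poly Ru F} := map_poly (@cR F) q.

Definition phi (F : finFieldType) (eps gam : F) : {poly F} :=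
  'X^2 + (eps * gam)%:P * 'X + (gam ^+ 2 / 2%:R)%:P.

Definition RE (F : finFieldType) (eps gam : F) (N : nat) :=
  {poly %/ (liftp (phi eps gam ^+ N))}.
HB.instance Definition _ (F : finFieldType) (eps gam : F) (N : nat) :=
  Finite.on (RE eps gam N).
HB.instance Definition _ (F : finFieldType) (eps gam : F) (N : nat) :=
  GRing.ComNzRing.on (RE eps gam N).
Definition toRE (F : finFieldType) (eps gam : F) (N : nat) (q : {poly Ru F}) :
  RE eps gam N := in_qpoly (liftp (phi eps gam ^+ N)) q.

Definition phiE (F : finFieldType) (eps gam : F) (N : nat) : RE eps gam N :=
  toRE eps gam N (liftp (phi eps gam)).
Definition uE (F : finFieldType) (eps gam : F) (N : nat) : RE eps gam N :=
  toRE eps gam N (uR F)%:P.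
Definition polE (F : finFieldType) (eps gam : F) (N : nat) (h : {poly F}) : RE eps gam N :=
  toRE eps gam N (liftp h).

Definition gen1 (T : finComNzRingType) (g : T) : {set T} := [set r * g | r : T].
Definition gen2 (T : finComNzRingType) (g1 g2 : T) : {set T} :=
  [set r1 * g1 + r2 * g2 | r1 : T, r2 : T].

Definition isunit (T : comNzRingType) (x : T) : Prop := exists v : T, v * x = 1.

Definition hform (F : finFieldType) (eps gam : F) (N k : nat) (h : {poly F}) : Prop :=
  h = 0 \/
  ((exists a b : nat -> F, (a 0%N != 0 \/ b 0%N != 0) /\
      h = \sum_(j < k) (a j *: 'X + (b j)%:P) * phi eps gam ^+ j)
   /\ isunit (polE eps gam N h)).

Definition gIII (F : finFieldType) (eps gam : F) (N i t : nat) (h : {poly F}) : RE eps gam N :=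
  phiE eps gam N ^+ i + uE eps gam N * phiE eps gam N ^+ t * polE eps gam N h.

(* Main.v *)
Require Import Defs.
From HB Require Import structures.
From mathcomp Require Import all_boot all_order all_algebra.
Import GRing.Theory.
Import Pdiv.CommonRing Pdiv.RingMonic.
Set Implicit Arguments. Unset Strict Implicit.
From mathcomp Require Import ring.
Local Open Scope ring_scope.

Lemma mkmonicX2 (F : finFieldType) : mk_monic ('X^2 : {poly F}) = 'X^2.
Proof. by rewrite /mk_monic size_polyXn monicXn. Qed.

Lemma cR_val (F : finFieldType) (c : F) : polyn (cR c) = c%:P.
Proof. by rewrite /cR in_qpoly_small // mkmonicX2 size_polyXn size_polyC; case: (c != 0). Qed.

Lemma uR_val (F : finFieldType) : polyn (uR F) = 'X.
Proof. by rewrite /uR qpolyXE ?size_polyXn ?monicXn. Qed.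

Lemma cR_is_zmod (F : finFieldType) : zmod_morphism (@cR F).
Proof. by move=> a b; rewrite /cR polyCB raddfB. Qed.
Lemma cR_is_monoid (F : finFieldType) : monoid_morphism (@cR F).
Proof. by split; rewrite /cR ?rmorph1 // => a b; rewrite polyCM rmorphM. Qed.
HB.instance Definition _ (F : finFieldType) := GRing.isZmodMorphism.Build _ _ (@cR F) (@cR_is_zmod F).
HB.instance Definition _ (F : finFieldType) := GRing.isMonoidMorphism.Build _ _ (@cR F) (@cR_is_monoid F).

Lemma uR2 (F : finFieldType) : uR F * uR F = 0.
Proof. by rewrite /uR -rmorphM -expr2; apply/val_inj; rewrite /= mkmonicX2 rmodpp ?monicXn. Qed.

Lemma Ru_val (F : finFieldType) (a b : F) : polyn (cR a + uR F * cR b) = a%:P + b *: 'X.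
Proof.
rewrite /uR /cR -!rmorphM -rmorphD in_qpoly_small; first by rewrite mulrC mul_polyC.
rewrite mkmonicX2 size_polyXn mulrC mul_polyC.
apply: leq_ltn_trans (size_polyD _ _) _; rewrite gtn_max size_polyC.
rewrite (leq_ltn_trans (size_scale_leq _ _)) ?size_polyX //; by case: (_ != 0).
Qed.

Lemma Ru_decomp (F : finFieldType) (c : Ru F) : c = cR ((polyn c)`_0) + uR F * cR ((polyn c)`_1).
Proof.
apply: val_inj; change (polyn c = polyn (cR (polyn c)`_0 + uR F * cR (polyn c)`_1)).
rewrite Ru_val.
have : (size (polyn c) <= 2)%N.
  by rewrite -ltnS; apply: leq_trans (size_mk_monic c) _; rewrite mkmonicX2 size_polyXn.
move=> hs; apply/polyP => k; rewrite coefD coefZ coefC coefX.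
case: k => [|[|k]] /=; rewrite ?mulr0 ?mulr1 ?addr0 ?add0r //.
by rewrite nth_default // (leq_trans hs).
Qed.

Lemma Ru_uniq (F : finFieldType) (a b a' b' : F) :
  cR a + uR F * cR b = cR a' + uR F * cR b' -> a = a' /\ b = b'.
Proof.
move=> /(congr1 (@polyn _ _)); rewrite !Ru_val => e.
split; [have := congr1 (fun q : {poly F} => q`_0) e | have := congr1 (fun q : {poly F} => q`_1) e];
by rewrite /= !coefD !coefZ !coefC !coefX /= ?mulr0 ?mulr1 ?addr0 ?add0r.
Qed.

Lemma cR_inj (F : finFieldType) : injective (@cR F).
Proof. by move=> a b /(congr1 (@polyn _ _)); rewrite !cR_val => /polyC_inj. Qed.

Definition P0 (F : finFieldType) (q : {poly Ru F}) : {poly F} := map_poly (fun c : Ru F => (polyn c)`_0) q.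
Definition P1 (F : finFieldType) (q : {poly Ru F}) : {poly F} := map_poly (fun c : Ru F => (polyn c)`_1) q.

Lemma poly_decomp (F : finFieldType) (q : {poly Ru F}) :
  q = liftp (P0 q) + (uR F)%:P * liftp (P1 q).
Proof.
apply/polyP => k; rewrite coefD coefCM /liftp !coef_map /P0 /P1 !coef_map_id0 //.
- exact: Ru_decomp.
- by rewrite /= coef0.
- by rewrite /= coef0.
Qed.

Lemma poly_uniq (F : finFieldType) (a b a' b' : {poly F}) :
  liftp a + (uR F)%:P * liftp b = liftp a' + (uR F)%:P * liftp b' -> a = a' /\ b = b'.
Proof.
move=> e; suff H : forall k, a`_k = a'`_k /\ b`_k = b'`_k.
  by split; apply/polyP => k; case: (H k).
move=> k; apply: Ru_uniq.
by have := congr1 (fun q : {poly Ru F} => q`_k) e; rewrite /= !coefD !coefCM /liftp !coef_map.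
Qed.

Lemma phi_monic (F : finFieldType) (eps gam : F) : phi eps gam \is monic.
Proof.
rewrite /phi -addrA monicE lead_coefDl ?lead_coefXn //.
rewrite size_polyXn; apply: leq_ltn_trans (size_polyD _ _) _.
rewrite gtn_max size_polyC (leq_ltn_trans (size_polyMleq _ _)) ?size_polyC ?size_polyX //.
  by case: (_ != 0).
by case: (_ != 0).
Qed.

Lemma phi_size (F : finFieldType) (eps gam : F) : size (phi eps gam) = 3%N.
Proof.
rewrite /phi -addrA size_polyDl ?size_polyXn //.
rewrite ?size_polyXn; apply: leq_ltn_trans (size_polyD _ _) _.
rewrite gtn_max size_polyC (leq_ltn_trans (size_polyMleq _ _)) ?size_polyC ?size_polyX //.
  by case: (_ != 0).
by case: (_ != 0).
Qed.

Lemma phiX_size (F : finFieldType) (eps gam : F) n : size (phi eps gam ^+ n) = (2 * n).+1.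
Proof.
have := size_exp (phi eps gam) n; rewrite phi_size /=.
have : phi eps gam ^+ n != 0 by rewrite monic_neq0 // monic_exp // phi_monic.
rewrite -size_poly_gt0; case: (size _) => //= n' _ -> //.
Qed.

Lemma L_monic (F : finFieldType) (eps gam : F) N : liftp (phi eps gam ^+ N) \is monic.
Proof. by rewrite /liftp monic_map // monic_exp // phi_monic. Qed.

Lemma L_size (F : finFieldType) (eps gam : F) N : size (liftp (phi eps gam ^+ N)) = (2 * N).+1.
Proof.
rewrite /liftp size_map_poly_id0 ?phiX_size //.
by rewrite (eqP (monic_exp N (phi_monic eps gam))) rmorph1 oner_neq0.
Qed.

Lemma mkL (F : finFieldType) (eps gam : F) (N : nat) : (0 < N)%N ->
  mk_monic (liftp (phi eps gam ^+ N)) = liftp (phi eps gam ^+ N).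
Proof. by move=> N0; rewrite /mk_monic L_size L_monic ltnS muln_gt0 N0. Qed.

Lemma polE_is_zmod (F : finFieldType) (eps gam : F) N : zmod_morphism (@polE F eps gam N).
Proof. by move=> a b; rewrite /polE /toRE /liftp !rmorphB. Qed.
Lemma polE_is_monoid (F : finFieldType) (eps gam : F) N : monoid_morphism (@polE F eps gam N).
Proof. by split; rewrite /polE /toRE /liftp ?rmorph1 // => a b; rewrite !rmorphM. Qed.
HB.instance Definition _ (F : finFieldType) (eps gam : F) N :=
  GRing.isZmodMorphism.Build _ _ (@polE F eps gam N) (@polE_is_zmod F eps gam N).
HB.instance Definition _ (F : finFieldType) (eps gam : F) N :=
  GRing.isMonoidMorphism.Build _ _ (@polE F eps gam N) (@polE_is_monoid F eps gam N).

Lemma uE2 (F : finFieldType) (eps gam : F) N : uE eps gam N * uE eps gam N = 0.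
Proof. by rewrite /uE /toRE -rmorphM -polyCM uR2 rmorph0. Qed.

Lemma polE_phiN (F : finFieldType) (eps gam : F) N : (0 < N)%N ->
  polE eps gam N (phi eps gam ^+ N) = 0.
Proof.
move=> N0; apply: val_inj => /=.
by rewrite mkL // rmodpp // L_monic.
Qed.

Lemma polEM (F : finFieldType) (eps gam : F) N a b : polE eps gam N (a * b) = polE eps gam N a * polE eps gam N b.
Proof. exact: rmorphM. Qed.
Lemma polED (F : finFieldType) (eps gam : F) N a b : polE eps gam N (a + b) = polE eps gam N a + polE eps gam N b.
Proof. exact: rmorphD. Qed.
Lemma polEB (F : finFieldType) (eps gam : F) N a b : polE eps gam N (a - b) = polE eps gam N a - polE eps gam N b.
Proof. exact: rmorphB. Qed.
Lemma polE0 (F : finFieldType) (eps gam : F) N : polE eps gam N 0 = 0.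
Proof. exact: rmorph0. Qed.

Lemma polEX (F : finFieldType) (eps gam : F) N a n : polE eps gam N (a ^+ n) = polE eps gam N a ^+ n.
Proof. exact: rmorphXn. Qed.

Lemma phiE_N (F : finFieldType) (eps gam : F) N : (0 < N)%N ->
  phiE eps gam N ^+ N = 0.
Proof.
move=> N0; have -> : phiE eps gam N = polE eps gam N (phi eps gam) by [].
by rewrite -polEX polE_phiN.
Qed.

Lemma toRE_val (F : finFieldType) (eps gam : F) N (r : RE eps gam N) : toRE eps gam N (polyn r) = r.
Proof. by apply: val_inj; exact: (in_qpoly_small (size_mk_monic r)). Qed.

Lemma E_decomp (F : finFieldType) (eps gam : F) N (r : RE eps gam N) :
  exists a b, r = polE eps gam N a + uE eps gam N * polE eps gam N b.
Proof.
exists (P0 (polyn r)), (P1 (polyn r)).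
by rewrite -{1}(toRE_val r) {1}(poly_decomp (polyn r)) /toRE rmorphD rmorphM.
Qed.

Lemma uE_kill (F : finFieldType) (eps gam : F) N (a : {poly F}) : (0 < N)%N ->
  uE eps gam N * polE eps gam N a = 0 -> (phi eps gam ^+ N %| a)%R.
Proof.
move=> N0; rewrite /uE /polE /toRE -rmorphM => /(congr1 (@polyn _ _)) /=.
rewrite mkL // => e.
set q := _ * _ in e.
have hq := rdivp_eq (L_monic eps gam N) q.
rewrite e addr0 [rdivp _ _]poly_decomp in hq.
rewrite mulrDl -mulrA -!rmorphM /= in hq.
have e2 : liftp 0 + (uR F)%:P * liftp a = q by rewrite /liftp map_poly0 add0r.
rewrite hq in e2.
have [_ ->] := poly_uniq e2.
by rewrite dvdp_mull.
Qed.

Lemma card_split (T : finComNzRingType) (c : T) (I : {set T}) :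
  (forall x y, x \in I -> y \in I -> x - y \in I) ->
  #|I| = muln #|[set c * x | x in I]| #|I :&: [set x | c * x == 0]|.
Proof.
move=> subI.
rewrite -sum1_card (partition_big_imset (fun x => (c * x)%R)) /=.
rewrite -sum_nat_const; apply: eq_bigr => y /imsetP [x0 Ix0 ->].
rewrite sum1_card.
have -> : #|[pred x in I | c * x == c * x0]| = #|(fun z => z + x0) @: (I :&: [set x | c * x == 0])|.
  apply: eq_card => z; rewrite !inE; apply/andP/imsetP => [[Iz /eqP e]|[w]].
    exists (z - x0); last by rewrite subrK.
    by rewrite !inE subI // mulrBr e subrr eqxx.
  rewrite !inE => /andP [Iw /eqP cw] ->; split; last by rewrite mulrDr cw add0r.
  have I0 : 0 \in I by rewrite -(subrr x0) subI.
  have INx : - x0 \in I by rewrite -sub0r subI.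
  by rewrite -[x0]opprK subI.
rewrite card_imset //; exact: addIr.
Qed.

Lemma polE_phi (F : finFieldType) (eps gam : F) N : phiE eps gam N = polE eps gam N (phi eps gam).
Proof. by []. Qed.

Lemma phi_neq0 (F : finFieldType) (eps gam : F) n : phi eps gam ^+ n != 0.
Proof. by rewrite monic_neq0 // monic_exp // phi_monic. Qed.

Lemma dvd_small (F : finFieldType) (d q : {poly F}) : (d %| q)%R -> (size q < size d)%N -> q = 0.
Proof.
move=> dq sq; apply/eqP; apply: contraTT sq => q0.
by rewrite -leqNgt dvdp_leq.
Qed.

Lemma alg1 (R : comNzRingType) (A B C D u Phi : R) :
  u * u = 0 -> B * Phi = 0 -> (A * B + C + u * D) * (u * Phi) = u * Phi * C.
Proof.
move=> h1 h2.
transitivity (A * (B * Phi) * u + C * (u * Phi) + (u * u) * (D * Phi)); first by ring.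
by rewrite h1 h2; ring.
Qed.

Lemma base_count (F : finFieldType) (eps gam : F) N j : (0 < N)%N -> (j <= N)%N ->
  #|gen1 (uE eps gam N * phiE eps gam N ^+ j)| = (#|F| ^ (2 * (N - j)))%N.
Proof.
move=> N0 jN; set M := (N - j)%N.
pose P := polE eps gam N; pose u := uE eps gam N; pose ph := phi eps gam.
have phN : ph ^+ N = ph ^+ j * ph ^+ M by rewrite -exprD subnKC.
pose f := fun b : {poly_(2 * M) F} => u * phiE eps gam N ^+ j * P (polyn b).
have -> : gen1 (u * phiE eps gam N ^+ j) = f @: setT.
  apply/setP => x; apply/imsetP/imsetP => [[r _ ->]|[b _ ->]].
    have [a [b ->]] := E_decomp r.
    exists (npolyp (2 * M) (a %% ph ^+ M)) => //.
    rewrite /f npolypK; last first.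
      by rewrite -ltnS -(phiX_size eps gam M) ltn_modp phi_neq0.
    rewrite {1}(Pdiv.Field.divp_eq a (ph ^+ M)) rmorphD rmorphM.
    have h1 : u * u = 0 := uE2 eps gam N.
    have h2 : P (ph ^+ M) * phiE eps gam N ^+ j = 0.
      by rewrite polE_phi -rmorphXn -rmorphM -exprD addnC /M subnKC //; exact: polE_phiN.
    exact: alg1.
  by exists (P (polyn b)) => //; rewrite /f mulrC.
rewrite card_imset ?cardsT ?card_npoly //.
move=> b b' /eqP; rewrite -subr_eq0 /f -mulrBr -rmorphB polE_phi -polEX -mulrA -(rmorphM (polE eps gam N)).
move=> /eqP H; have := uE_kill N0 H; rewrite phN dvdp_mul2l ?phi_neq0 // => dv.
apply: val_inj; apply/eqP; rewrite -subr_eq0; apply/eqP.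
apply: dvd_small dv _; rewrite phiX_size ltnS.
apply: leq_trans (size_polyD _ _) _; by rewrite geq_max size_polyN !size_npoly.
Qed.

Lemma gen1P (T : finComNzRingType) (g x : T) : reflect (exists r, x = r * g) (x \in gen1 g).
Proof.
apply: (iffP imsetP) => [[r _ ->]|[r ->]]; by exists r.
Qed.

Lemma gen2P (T : finComNzRingType) (g1 g2 x : T) :
  reflect (exists r1 r2, x = r1 * g1 + r2 * g2) (x \in gen2 g1 g2).
Proof.
apply: (iffP imset2P) => [[r1 r2 _ _ ->]|[r1 [r2 ->]]]; first by exists r1, r2.
by exists r1 r2.
Qed.

Lemma gen1_sub (T : finComNzRingType) (g : T) x y : x \in gen1 g -> y \in gen1 g -> x - y \in gen1 g.
Proof. by move=> /gen1P [r ->] /gen1P [s ->]; apply/gen1P; exists (r - s); rewrite mulrBl. Qed.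

Lemma gen1_mul (T : finComNzRingType) (g : T) x r : x \in gen1 g -> r * x \in gen1 g.
Proof. by move=> /gen1P [s ->]; apply/gen1P; exists (r * s); rewrite mulrA. Qed.

Lemma gen2_sub (T : finComNzRingType) (g1 g2 : T) x y :
  x \in gen2 g1 g2 -> y \in gen2 g1 g2 -> x - y \in gen2 g1 g2.
Proof.
move=> /gen2P [r1 [r2 ->]] /gen2P [s1 [s2 ->]]; apply/gen2P; exists (r1 - s1), (r2 - s2).
by rewrite !mulrBl; ring.
Qed.

Lemma ugIII (F : finFieldType) (eps gam : F) N i t h :
  uE eps gam N * gIII eps gam N i t h = uE eps gam N * phiE eps gam N ^+ i.
Proof.
rewrite /gIII mulrDr -!mulrA mulrA uE2 mul0r addr0 //.
Qed.

Lemma alg2 (R : comNzRingType) (u Pa Pb Pi Pt Ph : R) :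
  u * u = 0 -> u * ((Pa + u * Pb) * (Pi + u * Pt * Ph)) = u * (Pa * Pi).
Proof.
move=> h1.
transitivity (u * Pa * Pi + (u * u) * (Pb * Pi + Pa * Pt * Ph + u * Pb * Pt * Ph)); first by ring.
by rewrite h1 mul0r addr0 mulrA.
Qed.

Lemma alg3 (R : comNzRingType) (A u Pb Pk Pi Pt Ph : R) :
  u * u = 0 -> Pk * Pi = 0 ->
  (A * Pk + u * Pb) * (Pi + u * Pt * Ph) = u * (Pk * Pt) * A * Ph + u * Pi * Pb.
Proof.
move=> h1 h2.
transitivity (A * (Pk * Pi) + u * (Pk * Pt) * A * Ph + u * Pi * Pb + (u * u) * (Pb * Pt * Ph)); first by ring.
by rewrite h1 h2; ring.
Qed.

Lemma III_ker (F : finFieldType) (eps gam : F) N i t h (r : RE eps gam N) :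
  (0 < N)%N -> (i <= N)%N -> uE eps gam N * (r * gIII eps gam N i t h) = 0 ->
  exists a' b, r * gIII eps gam N i t h =
    uE eps gam N * phiE eps gam N ^+ (N - i + t) * polE eps gam N a' * polE eps gam N h
    + uE eps gam N * phiE eps gam N ^+ i * polE eps gam N b.
Proof.
move=> N0 iN; have [a [b ->]] := E_decomp r.
have h1 := uE2 eps gam N.
rewrite /gIII alg2 // => H.
rewrite polE_phi -polEX -polEM in H; have dv := uE_kill N0 H.
have : (phi eps gam ^+ i * phi eps gam ^+ (N - i) %| phi eps gam ^+ i * a)%R.
  by rewrite -exprD subnKC // mulrC.
rewrite dvdp_mul2l ?phi_neq0 // => /Pdiv.Field.divpK ea.
exists (a %/ phi eps gam ^+ (N - i)), b.
rewrite -{1}ea polEM polEX -polE_phi exprD; apply: alg3 => //.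
by rewrite -exprD subnK // phiE_N.
Qed.

Lemma gen1_add (T : finComNzRingType) (g : T) x y : x \in gen1 g -> y \in gen1 g -> x + y \in gen1 g.
Proof. by move=> /gen1P [r ->] /gen1P [s ->]; apply/gen1P; exists (r + s); rewrite mulrDl. Qed.

Lemma alg4 (R : comNzRingType) (u Phi A H B : R) k n1 n2 : (k <= n1)%N -> (k <= n2)%N ->
  u * Phi ^+ n1 * A * H + u * Phi ^+ n2 * B =
  (Phi ^+ (n1 - k) * A * H + Phi ^+ (n2 - k) * B) * (u * Phi ^+ k).
Proof.
move=> k1 k2; rewrite -{1}(subnK k1) -{1}(subnK k2) !exprD.
set X := Phi ^+ (n1 - k); set Y := Phi ^+ (n2 - k); set Z := Phi ^+ k.
ring.
Qed.

Lemma alg5 (R : comNzRingType) (u Phi B : R) k n : (k <= n)%N ->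
  u * Phi ^+ n * B = (Phi ^+ (n - k) * B) * (u * Phi ^+ k).
Proof.
move=> k1; rewrite -{1}(subnK k1) !exprD.
set X := Phi ^+ (n - k); set Z := Phi ^+ k.
ring.
Qed.

Lemma III_ker_sub (F : finFieldType) (eps gam : F) N i t h k (r : RE eps gam N) :
  (0 < N)%N -> (i <= N)%N -> (k <= i)%N ->
  (polE eps gam N h = 0 \/ (k <= N - i + t)%N) ->
  uE eps gam N * (r * gIII eps gam N i t h) = 0 ->
  r * gIII eps gam N i t h \in gen1 (uE eps gam N * phiE eps gam N ^+ k).
Proof.
move=> N0 iN ki hk /(III_ker N0 iN) [a' [b ->]]; apply/gen1P.
case: hk => [-> | kk].
  by rewrite mulr0 add0r; eexists; apply: alg5.
by eexists; apply: alg4.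
Qed.

Lemma ui_in (F : finFieldType) (eps gam : F) N i t h :
  uE eps gam N * phiE eps gam N ^+ i \in gen1 (gIII eps gam N i t h).
Proof. by apply/gen1P; exists (uE eps gam N); rewrite ugIII. Qed.

Lemma alg6 (R : comNzRingType) (u Phi H v G : R) a b c :
  Phi ^+ (a + b) = 0 -> v * H = 1 ->
  u * Phi ^+ (a + c) = v * Phi ^+ a * (Phi ^+ b + u * Phi ^+ c * H).
Proof.
move=> h1 h2.
transitivity (v * (Phi ^+ (a + b)) + u * Phi ^+ (a + c) * (v * H)); last first.
  by rewrite !exprD; ring.
by rewrite h1 h2; ring.
Qed.

Lemma unit_in (F : finFieldType) (eps gam : F) N i t h :
  (0 < N)%N -> (i <= N)%N -> isunit (polE eps gam N h) ->
  uE eps gam N * phiE eps gam N ^+ (N - i + t) \in gen1 (gIII eps gam N i t h).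
Proof.
move=> N0 iN [v hv]; apply/gen1P; exists (v * phiE eps gam N ^+ (N - i)).
apply: alg6 => //; by rewrite subnK // phiE_N.
Qed.

Lemma alg8 (R : comNzRingType) (u r W : R) : u * u = 0 -> u * (r * (u * W)) = 0.
Proof. by move=> h; rewrite mulrCA [u * (u * W)]mulrA h mul0r mulr0. Qed.

Lemma count_gen1 (F : finFieldType) (eps gam : F) N i t h k :
  (0 < N)%N -> (i <= N)%N -> (k <= i)%N ->
  (polE eps gam N h = 0 \/ (k <= N - i + t)%N) ->
  uE eps gam N * phiE eps gam N ^+ k \in gen1 (gIII eps gam N i t h) ->
  #|gen1 (gIII eps gam N i t h)| = (#|F| ^ (2 * (N - i)) * #|F| ^ (2 * (N - k)))%N.
Proof.
move=> N0 iN ki hk kin.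
rewrite (card_split (uE eps gam N)); last exact: gen1_sub.
rewrite -(base_count eps gam N0 iN) -(base_count eps gam N0 (leq_trans ki iN)).
congr muln; apply: eq_card => x.
  apply/imsetP/gen1P => [[y /gen1P [r ->] ->]|[r ->]].
    by exists r; rewrite mulrCA; congr (_ * _); exact: (ugIII eps gam N i t h).
  exists (r * gIII eps gam N i t h); first by apply/gen1P; exists r.
by rewrite [RHS]mulrCA; congr (_ * _); symmetry; exact: (ugIII eps gam N i t h).
rewrite !inE; apply/andP/idP => [[/gen1P [r ->] /eqP]|].
  exact: III_ker_sub.
move=> /gen1P [r ->]; split; first exact: gen1_mul.
by apply/eqP; apply: alg8; exact: uE2.
Qed.

Lemma alg7 (R : comNzRingType) (u G r1 r2 W : R) :
  u * u = 0 -> u * (r1 * G + r2 * (u * W)) = u * (r1 * G).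
Proof. move=> h; transitivity (u * (r1 * G) + (u * u) * (r2 * W)); first by ring. by rewrite h mul0r addr0. Qed.

Lemma count_gen2 (F : finFieldType) (eps gam : F) N i t h w :
  (0 < N)%N -> (i <= N)%N -> (w <= i)%N ->
  (polE eps gam N h = 0 \/ (w <= N - i + t)%N) ->
  #|gen2 (gIII eps gam N i t h) (uE eps gam N * phiE eps gam N ^+ w)| =
    (#|F| ^ (2 * (N - i)) * #|F| ^ (2 * (N - w)))%N.
Proof.
move=> N0 iN wi hw.
rewrite (card_split (uE eps gam N)); last exact: gen2_sub.
rewrite -(base_count eps gam N0 iN) -(base_count eps gam N0 (leq_trans wi iN)).
congr muln; apply: eq_card => x.
  apply/imsetP/gen1P => [[y /gen2P [r1 [r2 ->]] ->]|[r ->]].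
    by exists r1; rewrite alg7 ?uE2 // mulrCA; congr (_ * _); exact: (ugIII eps gam N i t h).
  exists (r * gIII eps gam N i t h + 0 * (uE eps gam N * phiE eps gam N ^+ w)).
    by apply/gen2P; exists r, 0.
  by rewrite mul0r addr0 [RHS]mulrCA; congr (_ * _); symmetry; exact: (ugIII eps gam N i t h).
rewrite !inE; apply/andP/idP => [[/gen2P [r1 [r2 ->]] /eqP]|].
  rewrite alg7 ?uE2 // => /(III_ker_sub N0 iN wi hw) H1.
  by apply: gen1_add => //; apply/gen1P; exists r2.
move=> /gen1P [r ->]; split.
  by apply/gen2P; exists 0, r; rewrite mul0r add0r.
by apply/eqP; apply: alg8; exact: uE2.
Qed.

From mathcomp Require Import zify.
Unset Implicit Arguments.
Theorem theorem3p14 (p m s : nat) (F : finFieldType) (alpha alpha0 gam eps : F) :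
  prime p -> odd p -> (0 < m)%N -> (0 < s)%N ->
  #|F| = (p ^ m)%N -> (p ^ m %% 4 = 3)%N ->
  alpha != 0 -> (forall b : F, b ^+ 2 != alpha) ->
  alpha0 ^+ (p ^ s) = alpha -> gam ^+ 4 + 4%:R * alpha0 = 0 ->
  (eps = 1 \/ eps = -1) ->
  let N := (p ^ s)%N in
  forall I : {set RE eps gam N},
    (* (a) *)
    (I = [set 0] -> #|I| = 1%N) /\
    (* (b) *)
    (I = [set: RE eps gam N] -> #|I| = (p ^ (4 * m * N))%N) /\
    (* (c) *)
    (forall i : nat, (i <= N - 1)%N ->
       I = gen1 (uE eps gam N * phiE eps gam N ^+ i) ->
       #|I| = (p ^ (2 * m * (N - i)))%N) /\
    (* (d) Type III *)
    (forall (i t : nat) (h : {poly F}),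
       (1 <= i <= N - 1)%N -> (t < i)%N -> hform eps gam N (i - t) h ->
       I = gen1 (gIII eps gam N i t h) ->
       ((h = 0 \/ (isunit (polE eps gam N h) /\ (2 * i <= N + t)%N)) ->
          #|I| = (p ^ (4 * m * (N - i)))%N) /\
       ((isunit (polE eps gam N h) /\ (N + t < 2 * i)%N) ->
          #|I| = (p ^ (2 * m * (N - t)))%N)) /\
    (* (e) Type IV *)
    (forall (i t w : nat) (h : {poly F}),
       (1 <= i <= N - 1)%N -> (t < w)%N -> hform eps gam N (w - t) h ->
       (forall U : nat,
          uE eps gam N * phiE eps gam N ^+ U \in gen1 (gIII eps gam N i t h) ->
          (w < U)%N) ->
       I = gen2 (gIII eps gam N i t h) (uE eps gam N * phiE eps gam N ^+ w) ->
       #|I| = (p ^ (2 * m * (2 * N - i - w)))%N).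
Proof.
Proof.
move=> pr oddp m0 s0 cardF _ _ _ _ _ _ N I.
have N0 : (0 < N)%N by rewrite expn_gt0 prime_gt0.
have cpow n : (#|F| ^ n = p ^ (m * n))%N by rewrite cardF expnM.
split; first by move=> ->; exact: cards1.
split.
  move=> ->; rewrite cardsT card_qpoly mkL // L_size /= card_qpoly mkmonicX2 size_polyXn /=.
  rewrite cpow -expnM; congr (expn p _); lia.
split.
  move=> i iN ->; rewrite base_count //; last by lia.
  by rewrite cpow; congr (expn p _); lia.
split.
  move=> i t h /andP [i1 iN1] ti hf ->; have iN : (i <= N)%N by lia.
  split.
    case=> [h0 | [hu hi]].
      rewrite (count_gen1 (k := i)) //; last exact: ui_in.
        by rewrite !cpow -expnD; congr (expn p _); lia.
      by left; rewrite h0 polE0.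
    rewrite (count_gen1 (k := i)) //; last exact: ui_in.
      by rewrite !cpow -expnD; congr (expn p _); lia.
    by right; lia.
  case=> hu hi.
  rewrite (count_gen1 (k := (N - i + t)%N)) //; last exact: unit_in.
  - by rewrite !cpow -expnD; congr (expn p _); lia.
  - by lia.
  - by right.
move=> i t w h /andP [i1 iN1] tw hf hU ->; have iN : (i <= N)%N by lia.
have wi : (w < i)%N := hU i (ui_in _ _ _ _ _ _).
rewrite count_gen2 //; last 2 first.
- exact: ltnW.
- case: hf => [-> | [_ hu]]; first by left; rewrite polE0.
  by right; apply: ltnW; apply: hU; exact: unit_in.
by rewrite !cpow -expnD; congr (expn p _); lia.
Qed.
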